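(* A finitely generated variety of distributive double p-algebras is a discriminator variety if and only if it is generated by a finite set of simple algebras.
   Context: A distributive double p-algebra is an algebra $\langle A;\vee,\wedge,{}^*,{}^+,0,1\rangle$ whose reduct $\langle A;\vee,\wedge,0,1\rangle$ is a bounded distributive lattice and where $x\wedge y=0\iff y\le x^*$ and $x\vee y=1\iff y\ge x^+$. The ternary discriminator on a set $A$ is $\tau(x,y,z)=x$ if $x\ne y$ and $\tau(x,y,z)=z$ if $x=y$. A variety $\mathcal V$ is a discriminator variety if there is a ternary term $t$ such that $t^{\mathbf A}$ is the ternary discriminator on every subdirectly irreducible $\mathbf A\in\mathcal V$. *)

(* Defs.v *)
From Stdlib Require Import List.

Record alg : Type := Alg {
  car : Type;
  ajoin : car -> car -> car;
  ameet : car -> car -> car;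
  astar : car -> car;
  aplus : car -> car;
  azero : car;
  aone : car
}.

Definition ale (A : alg) (x y : car A) : Prop := ameet A x y = x.

Definition is_ddpa (A : alg) : Prop :=
  (forall x y z, ajoin A x (ajoin A y z) = ajoin A (ajoin A x y) z) /\
  (forall x y z, ameet A x (ameet A y z) = ameet A (ameet A x y) z) /\
  (forall x y, ajoin A x y = ajoin A y x) /\
  (forall x y, ameet A x y = ameet A y x) /\
  (forall x y, ajoin A x (ameet A x y) = x) /\
  (forall x y, ameet A x (ajoin A x y) = x) /\
  (forall x y z, ameet A x (ajoin A y z) = ajoin A (ameet A x y) (ameet A x z)) /\
  (forall x, ajoin A x (azero A) = x) /\
  (forall x, ameet A x (aone A) = x) /\
  (forall x y, ameet A x y = azero A <-> ale A y (astar A x)) /\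
  (forall x y, ajoin A x y = aone A <-> ale A (aplus A x) y).

Definition is_hom (A B : alg) (f : car A -> car B) : Prop :=
  (forall x y, f (ajoin A x y) = ajoin B (f x) (f y)) /\
  (forall x y, f (ameet A x y) = ameet B (f x) (f y)) /\
  (forall x, f (astar A x) = astar B (f x)) /\
  (forall x, f (aplus A x) = aplus B (f x)) /\
  f (azero A) = azero B /\
  f (aone A) = aone B.

Definition prod_alg (I : Type) (F : I -> alg) : alg :=
  {| car := forall i, car (F i);
     ajoin := fun x y i => ajoin (F i) (x i) (y i);
     ameet := fun x y i => ameet (F i) (x i) (y i);
     astar := fun x i => astar (F i) (x i);
     aplus := fun x i => aplus (F i) (x i);
     azero := fun i => azero (F i);
     aone := fun i => aone (F i) |}.

Definition aclass := alg -> Prop.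

(* A variety: a class closed under homomorphic images (H), subalgebras
   (S, up to isomorphism: algebras embedding into a member) and direct
   products (P). *)
Definition is_variety (V : aclass) : Prop :=
  (forall A B (f : car A -> car B),
      V A -> is_hom A B f -> (forall y, exists x, f x = y) -> V B) /\
  (forall A B (f : car A -> car B),
      V B -> is_hom A B f -> (forall x y, f x = f y -> x = y) -> V A) /\
  (forall (I : Type) (F : I -> alg), (forall i, V (F i)) -> V (prod_alg I F)).

Definition generated_by (K : list alg) (V : aclass) : Prop :=
  is_variety V /\ (forall A, In A K -> V A) /\
  (forall W, is_variety W -> (forall A, In A K -> W A) -> forall A, V A -> W A).

Definition finite_alg (A : alg) : Prop :=
  exists l : list (car A), forall x, In x l.

Definition finitely_generated (V : aclass) : Prop :=
  exists K : list alg, (forall A, In A K -> finite_alg A) /\ generated_by K V.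

Definition is_congruence (A : alg) (th : car A -> car A -> Prop) : Prop :=
  (forall x, th x x) /\ (forall x y, th x y -> th y x) /\
  (forall x y z, th x y -> th y z -> th x z) /\
  (forall x x' y y', th x x' -> th y y' -> th (ajoin A x y) (ajoin A x' y')) /\
  (forall x x' y y', th x x' -> th y y' -> th (ameet A x y) (ameet A x' y')) /\
  (forall x x', th x x' -> th (astar A x) (astar A x')) /\
  (forall x x', th x x' -> th (aplus A x) (aplus A x')).

(* Subdirectly irreducible: there is a pair a <> b lying in every
   non-identity congruence (the monolith is non-trivial). *)
Definition subdirectly_irreducible (A : alg) : Prop :=
  exists a b : car A, a <> b /\
    forall th, is_congruence A th -> (exists x y, x <> y /\ th x y) -> th a b.

Definition simple_alg (A : alg) : Prop :=
  (exists a b : car A, a <> b) /\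
  forall th, is_congruence A th ->
    (forall x y, th x y -> x = y) \/ (forall x y, th x y).

Inductive term (X : Type) : Type :=
| TVar : X -> term X
| TJoin : term X -> term X -> term X
| TMeet : term X -> term X -> term X
| TStar : term X -> term X
| TPlus : term X -> term X
| TZero : term X
| TOne : term X.
Arguments TVar {X}. Arguments TJoin {X}. Arguments TMeet {X}.
Arguments TStar {X}. Arguments TPlus {X}. Arguments TZero {X}. Arguments TOne {X}.

Fixpoint eval_term {X : Type} (A : alg) (env : X -> car A) (t : term X) : car A :=
  match t with
  | TVar v => env v
  | TJoin t u => ajoin A (eval_term A env t) (eval_term A env u)
  | TMeet t u => ameet A (eval_term A env t) (eval_term A env u)
  | TStar t => astar A (eval_term A env t)
  | TPlus t => aplus A (eval_term A env t)
  | TZero => azero A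
  | TOne => aone A
  end.

Inductive var3 : Type := vx | vy | vz.

Definition env3 (A : alg) (x y z : car A) (v : var3) : car A :=
  match v with vx => x | vy => y | vz => z end.

Definition is_discriminator_term (A : alg) (t : term var3) : Prop :=
  forall x y z : car A,
    (x <> y -> eval_term A (env3 A x y z) t = x) /\
    (x = y -> eval_term A (env3 A x y z) t = z).

Definition discriminator_variety (V : aclass) : Prop :=
  exists t : term var3,
    forall A, V A -> subdirectly_irreducible A -> is_discriminator_term A t.

(* Main.v *)
Require Import Defs.
From Stdlib Require Import List Lia Classical ClassicalEpsilon FunctionalExtensionality PropExtensionality ProofIrrelevance.

Notation J x y := (ajoin _ x y).
Notation M x y := (ameet _ x y).
Notation St x := (astar _ x).
Notation Pl x := (aplus _ x).
Notation Zr := (azero _).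
Notation One := (aone _).
Notation "x <== y" := (ale _ x y) (at level 70).

Lemma jass A (H : is_ddpa A) (x y z : car A) : J x (J y z) = J (J x y) z.
Proof. apply H. Qed.
Lemma mass A (H : is_ddpa A) (x y z : car A) : M x (M y z) = M (M x y) z.
Proof. apply H. Qed.
Lemma jcom A (H : is_ddpa A) (x y : car A) : J x y = J y x.
Proof. apply H. Qed.
Lemma mcom A (H : is_ddpa A) (x y : car A) : M x y = M y x.
Proof. apply H. Qed.
Lemma jabs A (H : is_ddpa A) (x y : car A) : J x (M x y) = x.
Proof. apply H. Qed.
Lemma mabs A (H : is_ddpa A) (x y : car A) : M x (J x y) = x.
Proof. apply H. Qed.
Lemma mdist A (H : is_ddpa A) (x y z : car A) : M x (J y z) = J (M x y) (M x z).
Proof. apply H. Qed.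
Lemma j0 A (H : is_ddpa A) (x : car A) : J x Zr = x.
Proof. apply H. Qed.
Lemma m1 A (H : is_ddpa A) (x : car A) : M x One = x.
Proof. apply H. Qed.
Lemma sgal A (H : is_ddpa A) (x y : car A) : M x y = Zr <-> y <== St x.
Proof. apply H. Qed.
Lemma pgal A (H : is_ddpa A) (x y : car A) : J x y = One <-> Pl x <== y.
Proof. apply H. Qed.

Lemma midem A (H : is_ddpa A) (x : car A) : M x x = x.
Proof. rewrite <- (jabs A H x x) at 2. rewrite mabs; auto. Qed.
Lemma jidem A (H : is_ddpa A) (x : car A) : J x x = x.
Proof. rewrite <- (mabs A H x x) at 2. rewrite jabs; auto. Qed.

Lemma le_refl A (H : is_ddpa A) (x : car A) : x <== x.
Proof. apply midem; auto. Qed.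
Lemma le_antisym A (H : is_ddpa A) (x y : car A) : x <== y -> y <== x -> x = y.
Proof. unfold ale; intros h1 h2. transitivity (M x y); [symmetry; exact h1|]. rewrite mcom; auto. Qed.
Lemma le_trans A (H : is_ddpa A) (x y z : car A) : x <== y -> y <== z -> x <== z.
Proof. unfold ale; intros h1 h2. rewrite <- h1, <- mass, h2; auto. Qed.
Lemma le_join A (H : is_ddpa A) (x y : car A) : x <== y <-> J x y = y.
Proof. unfold ale; split; intro h.
 - rewrite <- h, jcom, mcom, jabs; auto.
 - rewrite <- h, mabs; auto. Qed.
Lemma le_m_l A (H : is_ddpa A) (x y : car A) : M x y <== x.
Proof. unfold ale. rewrite (mcom A H x y), <- mass, midem; auto. Qed.
Lemma le_m_r A (H : is_ddpa A) (x y : car A) : M x y <== y.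
Proof. unfold ale. rewrite <- mass, midem; auto. Qed.
Lemma le_m A (H : is_ddpa A) (x y z : car A) : z <== x -> z <== y -> z <== M x y.
Proof. unfold ale; intros h1 h2. rewrite mass, h1, h2; auto. Qed.
Lemma le_j_l A (H : is_ddpa A) (x y : car A) : x <== J x y.
Proof. apply mabs; auto. Qed.
Lemma le_j_r A (H : is_ddpa A) (x y : car A) : y <== J x y.
Proof. rewrite (jcom A H x y). apply mabs; auto. Qed.
Lemma le_j A (H : is_ddpa A) (x y z : car A) : x <== z -> y <== z -> J x y <== z.
Proof. rewrite !le_join; auto. intros h1 h2. rewrite <- jass, h2, h1; auto. Qed.
Lemma m0 A (H : is_ddpa A) (x : car A) : M x Zr = Zr.
Proof. transitivity (M Zr (J Zr x)). rewrite (jcom A H Zr x), j0, mcom; auto. apply mabs; auto. Qed.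
Lemma j1 A (H : is_ddpa A) (x : car A) : J x One = One.
Proof. transitivity (J One (M One x)). rewrite (mcom A H One x), m1, jcom; auto. apply jabs; auto. Qed.
Lemma le0 A (H : is_ddpa A) (x : car A) : Zr <== x.
Proof. unfold ale. rewrite mcom; auto. apply m0; auto. Qed.
Lemma le1 A (H : is_ddpa A) (x : car A) : x <== One.
Proof. apply m1; auto. Qed.
Lemma le0_eq A (H : is_ddpa A) (x : car A) : x <== Zr -> x = Zr.
Proof. intro; apply le_antisym; auto; apply le0; auto. Qed.
Lemma le1_eq A (H : is_ddpa A) (x : car A) : One <== x -> x = One.
Proof. intro; apply le_antisym; auto; apply le1; auto. Qed.
Lemma m_mono A (H : is_ddpa A) (x y x' y' : car A) : x <== x' -> y <== y' -> M x y <== M x' y'.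
Proof. intros; apply le_m; auto. - apply le_trans with x; auto; apply le_m_l; auto. - apply le_trans with y; auto; apply le_m_r; auto. Qed.
Lemma j_mono A (H : is_ddpa A) (x y x' y' : car A) : x <== x' -> y <== y' -> J x y <== J x' y'.
Proof. intros; apply le_j; auto. - apply le_trans with x'; auto; apply le_j_l; auto. - apply le_trans with y'; auto; apply le_j_r; auto. Qed.
Lemma jdist A (H : is_ddpa A) (x y z : car A) : J x (M y z) = M (J x y) (J x z).
Proof.
 symmetry. rewrite (mdist A H (J x y) x z). rewrite (mcom A H (J x y) x), mabs; auto.
 rewrite (mcom A H (J x y) z), mdist; auto. rewrite jass; auto.
 rewrite (mcom A H z x), jabs, (mcom A H z y); auto. Qed.

Definition dual (A : alg) : alg :=
  Alg (car A) (ameet A) (ajoin A) (aplus A) (astar A) (aone A) (azero A).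

Lemma ale_dual A (H : is_ddpa A) (x y : car A) : ale (dual A) x y <-> ale A y x.
Proof. unfold ale at 1; simpl. rewrite le_join, jcom; auto. tauto. Qed.

Lemma dual_ddpa A (H : is_ddpa A) : is_ddpa (dual A).
Proof.
 repeat split; simpl; intros.
 - apply mass; auto.
 - apply jass; auto.
 - apply mcom; auto.
 - apply jcom; auto.
 - apply mabs; auto.
 - apply jabs; auto.
 - apply jdist; auto.
 - apply m1; auto.
 - apply j0; auto.
 - apply ale_dual; auto; apply pgal; auto.
 - apply pgal; auto; apply ale_dual; auto.
 - apply ale_dual; auto; apply sgal; auto; rewrite mcom; auto.
 - apply sgal; auto; apply ale_dual; auto.
Qed.

Lemma sm A (H : is_ddpa A) (x : car A) : M x (St x) = Zr.
Proof. apply sgal; auto. apply le_refl; auto. Qed.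
Lemma le_ss A (H : is_ddpa A) (x : car A) : x <== St (St x).
Proof. apply sgal; auto. rewrite mcom; auto. apply sm; auto. Qed.
Lemma le_zero A (H : is_ddpa A) (x y : car A) : x <== y -> y = Zr -> x = Zr.
Proof. intros h e; subst. apply le0_eq; auto. Qed.
Lemma s_anti A (H : is_ddpa A) (x y : car A) : x <== y -> St y <== St x.
Proof. intro h. apply sgal; auto. apply le_zero with (M y (St y)); auto.
 apply m_mono; auto; apply le_refl; auto. apply sm; auto. Qed.
Lemma sss A (H : is_ddpa A) (x : car A) : St (St (St x)) = St x.
Proof. apply le_antisym; auto. apply s_anti; auto. apply le_ss; auto. apply le_ss; auto. Qed.
Lemma s0 A (H : is_ddpa A) : St (azero A) = aone A.
Proof. apply le1_eq; auto. apply sgal; auto. apply m1; auto. Qed.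
Lemma s1 A (H : is_ddpa A) : St (aone A) = azero A.
Proof. rewrite <- (sm A H (aone A)). rewrite (mcom A H (aone A)), m1; auto. Qed.
Lemma s_join A (H : is_ddpa A) (u w : car A) : St (J u w) = M (St u) (St w).
Proof.
 apply (le_antisym A H).
 - apply (le_m A H); apply (s_anti A H); [apply (le_j_l A H)|apply (le_j_r A H)].
 - apply (sgal A H). rewrite (mcom A H), (mdist A H).
   apply (le0_eq A H). apply (le_j A H).
   + apply (le_trans A H) with (M (St u) u). apply (m_mono A H); [apply (le_m_l A H)|apply (le_refl A H)].
     rewrite (mcom A H), (sm A H). apply (le_refl A H).
   + apply (le_trans A H) with (M (St w) w). apply (m_mono A H); [apply (le_m_r A H)|apply (le_refl A H)].
     rewrite (mcom A H), (sm A H). apply (le_refl A H).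
Qed.
Lemma zero_iff A (H : is_ddpa A) (x y : car A) : M x y = Zr <-> x <== St y.
Proof. rewrite (mcom A H). apply (sgal A H). Qed.
Lemma ss_meet A (H : is_ddpa A) (u w : car A) : St (St (M u w)) = M (St (St u)) (St (St w)).
Proof.
 apply (le_antisym A H).
 - apply (le_m A H); apply (s_anti A H); apply (s_anti A H); [apply (le_m_l A H)|apply (le_m_r A H)].
 - set (a := St (M u w)).
   assert (h1 : M (M a u) w = Zr).
   { apply (le0_eq A H). rewrite <- (sm A H (M u w)). fold a.
     rewrite (mcom A H (M u w) a). apply (le_m A H).
     apply (le_trans A H) with (M a u); [apply (le_m_l A H)|apply (le_m_l A H)].
     apply (le_m A H). apply (le_trans A H) with (M a u); [apply (le_m_l A H)|apply (le_m_r A H)].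
     apply (le_m_r A H). }
   apply (zero_iff A H) in h1.
   assert (h2 : M (M a (St (St w))) u = Zr).
   { apply (le0_eq A H). rewrite <- (sm A H (St w)). apply (le_m A H).
     - apply (le_trans A H) with (M a u). apply (le_m A H).
       + apply (le_trans A H) with (M a (St (St w))); apply (le_m_l A H).
       + apply (le_m_r A H).
       + exact h1.
     - apply (le_trans A H) with (M a (St (St w))); [apply (le_m_l A H)|apply (le_m_r A H)]. }
   apply (zero_iff A H) in h2.
   apply (sgal A H). apply (le0_eq A H). rewrite <- (sm A H (St u)).
   apply (le_m A H).
   + apply (le_trans A H) with (M a (St (St w))). apply (le_m A H). apply (le_m_l A H).
     apply (le_trans A H) with (M (St (St u)) (St (St w))); [apply (le_m_r A H)|apply (le_m_r A H)]. exact h2.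
   + apply (le_trans A H) with (M (St (St u)) (St (St w))); [apply (le_m_r A H)|apply (le_m_l A H)].
Qed.

Lemma pj A (H : is_ddpa A) (x : car A) : J x (Pl x) = One.
Proof. exact (sm (dual A) (dual_ddpa A H) x). Qed.
Lemma le_pp A (H : is_ddpa A) (x : car A) : Pl (Pl x) <== x.
Proof. apply ale_dual; auto. exact (le_ss (dual A) (dual_ddpa A H) x). Qed.
Lemma p_anti A (H : is_ddpa A) (x y : car A) : x <== y -> Pl y <== Pl x.
Proof. intro h. apply ale_dual; auto. apply (s_anti (dual A) (dual_ddpa A H)).
 apply ale_dual; auto. Qed.
Lemma ppp A (H : is_ddpa A) (x : car A) : Pl (Pl (Pl x)) = Pl x.
Proof. exact (sss (dual A) (dual_ddpa A H) x). Qed.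
Lemma p0 A (H : is_ddpa A) : Pl (azero A) = aone A.
Proof. exact (s1 (dual A) (dual_ddpa A H)). Qed.
Lemma p1 A (H : is_ddpa A) : Pl (aone A) = azero A.
Proof. exact (s0 (dual A) (dual_ddpa A H)). Qed.
Lemma p_meet A (H : is_ddpa A) (u w : car A) : Pl (M u w) = J (Pl u) (Pl w).
Proof. exact (s_join (dual A) (dual_ddpa A H) u w). Qed.
Lemma pp_join A (H : is_ddpa A) (u w : car A) : Pl (Pl (J u w)) = J (Pl (Pl u)) (Pl (Pl w)).
Proof. exact (ss_meet (dual A) (dual_ddpa A H) u w). Qed.

Lemma eval_ext {X} (A : alg) (e1 e2 : X -> car A) (t : term X) :
  (forall v, e1 v = e2 v) -> eval_term A e1 t = eval_term A e2 t.
Proof. intro h; induction t; simpl; congruence. Qed.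

Lemma hom_eval {X} A B (f : car A -> car B) (env : X -> car A) t :
  is_hom A B f -> f (eval_term A env t) = eval_term B (fun v => f (env v)) t.
Proof.
 intros (hj & hm & hs & hp & h0 & h1).
 induction t; simpl; try congruence.
Qed.

Lemma cong_eval {X} A (th : car A -> car A -> Prop) (e1 e2 : X -> car A) t :
  is_congruence A th -> (forall v, th (e1 v) (e2 v)) ->
  th (eval_term A e1 t) (eval_term A e2 t).
Proof.
 intros (hr & hs & ht & hj & hm & hst & hp) he.
 induction t; simpl; auto.
Qed.

Lemma prod_eval {X} I (F : I -> alg) (env : X -> car (prod_alg I F)) t i :
  eval_term (prod_alg I F) env t i = eval_term (F i) (fun v => env v i) t.
Proof. induction t; simpl; congruence. Qed.

Definition sat {X} (s u : term X) (A : alg) : Prop :=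
  forall env : X -> car A, eval_term A env s = eval_term A env u.

Lemma sat_variety {X} (s u : term X) : is_variety (sat s u).
Proof.
 split; [|split].
 - intros A B f hA hf hsur env.
   set (e := fun v => proj1_sig (constructive_indefinite_description _ (hsur (env v)))).
   assert (he : forall v, f (e v) = env v).
   { intro v. unfold e. destruct (constructive_indefinite_description _ _); auto. }
   rewrite (eval_ext B env (fun v => f (e v))) by (intro; auto).
   rewrite (eval_ext B env (fun v => f (e v)) u) by (intro; auto).
   rewrite <- !hom_eval by auto. rewrite hA. reflexivity.
 - intros A B f hB hf hinj env. apply hinj. rewrite !hom_eval by auto. apply hB.
 - intros I F hF env. apply functional_extensionality_dep. intro i.
   rewrite !prod_eval. apply hF.
Qed.

Lemma transfer {X} (s u : term X) (L : list alg) (V : aclass) :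
  generated_by L V -> (forall B, In B L -> sat s u B) -> forall A, V A -> sat s u A.
Proof.
 intros (_ & _ & hmin) hL A hA. exact (hmin (sat s u) (sat_variety s u) hL A hA).
Qed.

Fixpoint Gn (A : alg) (n : nat) (x : car A) : car A :=
  match n with 0 => x | S k => astar A (aplus A (Gn A k x)) end.

Fixpoint gterm {X} (n : nat) (t : term X) : term X :=
  match n with 0 => t | S k => TStar (TPlus (gterm k t)) end.

Lemma eval_gterm {X} A (env : X -> car A) n t :
  eval_term A env (gterm n t) = Gn A n (eval_term A env t).
Proof. induction n; simpl; congruence. Qed.

Lemma G_le A (H : is_ddpa A) (x : car A) : astar A (aplus A x) <== x.
Proof.
 unfold ale. set (g := St (Pl x)).
 transitivity (J (M g x) (M g (Pl x))).
 - unfold g. rewrite (mcom A H (St (Pl x)) (Pl x)), (sm A H), (j0 A H). reflexivity.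
 - rewrite <- (mdist A H), (pj A H), (m1 A H). reflexivity.
Qed.

Lemma Gn_O A (H : is_ddpa A) n : Gn A n (aone A) = aone A.
Proof. induction n; simpl; auto. rewrite IHn, (p1 A H), (s0 A H). auto. Qed.

Lemma Gn_le A (H : is_ddpa A) n (x : car A) : Gn A n x <== x.
Proof. induction n; simpl. apply le_refl; auto. eapply (le_trans A H). apply G_le; auto. auto. Qed.

Lemma Gn_decr A (H : is_ddpa A) (x : car A) i j : i <= j -> Gn A j x <== Gn A i x.
Proof. induction 1. apply le_refl; auto. eapply (le_trans A H). simpl. apply G_le; auto. auto. Qed.

Lemma Gn_stable A n m (x : car A) : Gn A n x = Gn A (S n) x -> n <= m -> Gn A m x = Gn A (S m) x.
Proof. intros h. induction 1; auto. simpl in *. rewrite <- IHle. auto. Qed.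

Lemma nodup_seq_map {T} (s : nat -> T) n : forall i,
  (forall p q, i <= p -> p < q -> q < i + n -> s p <> s q) -> NoDup (map s (seq i n)).
Proof.
 induction n; intros i h; simpl. constructor.
 constructor.
 - rewrite in_map_iff. intros (q & e & hq). apply in_seq in hq.
   apply (h i q); auto; lia.
 - apply IHn. intros p q h1 h2 h3. apply h; lia.
Qed.

Lemma finite_stable A (H : is_ddpa A) (l : list (car A)) (hl : forall x, In x l) (x : car A) :
  Gn A (length l) x = Gn A (S (length l)) x.
Proof.
 apply NNPP. intro hne.
 assert (hall : forall i, i <= length l -> Gn A i x <> Gn A (S i) x).
 { intros i hi e. apply hne. apply (Gn_stable A i); auto. }
 assert (hnd : NoDup (map (fun k => Gn A k x) (seq 0 (S (length l))))).
 { apply nodup_seq_map. intros p q h1 h2 h3 e. apply (hall p). lia.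
   apply (le_antisym A H).
   - rewrite e. apply (Gn_decr A H). lia.
   - simpl. apply G_le; auto. }
 apply NoDup_incl_length with (l' := l) in hnd.
 - rewrite length_map, length_seq in hnd. lia.
 - intros y _. auto.
Qed.

Lemma stab_list (K : list alg) :
  (forall A, In A K -> is_ddpa A /\ finite_alg A) ->
  exists n, forall A, In A K -> forall x : car A, Gn A n x = Gn A (S n) x.
Proof.
 induction K as [|B K IH]; intro h.
 - exists 0. intros A [].
 - destruct IH as [n hn]. intros; apply h; simpl; auto.
   destruct (h B (or_introl eq_refl)) as [hB [l hl]].
   exists (n + length l). intros A [e|hA] x.
   + subst. apply (Gn_stable A (length l)). apply finite_stable; auto. lia.
   + apply (Gn_stable A n). apply hn; auto. lia.
Qed.

Definition phi (A : alg) (d : car A) (u v : car A) : Prop := ameet A u d = ameet A v d.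

Lemma mm_d A (H : is_ddpa A) (u w d : car A) : M (M u w) d = M (M u d) (M w d).
Proof.
 apply (le_antisym A H).
 - apply (le_m A H); apply (m_mono A H); try apply (le_refl A H); [apply (le_m_l A H)|apply (le_m_r A H)].
 - apply (le_m A H). apply (le_m A H).
   + apply (le_trans A H) with (M u d); apply (le_m_l A H).
   + apply (le_trans A H) with (M w d); [apply (le_m_r A H)|apply (le_m_l A H)].
   + apply (le_trans A H) with (M u d); [apply (le_m_l A H)|apply (le_m_r A H)].
Qed.

Lemma phi_star A (H : is_ddpa A) (u d : car A) : M (St u) d = M (St (M u d)) d.
Proof.
 apply (le_antisym A H).
 - apply (m_mono A H). apply (s_anti A H). apply (le_m_l A H). apply (le_refl A H).
 - apply (le_m A H); [|apply (le_m_r A H)].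
   apply (zero_iff A H). apply (le0_eq A H).
   apply (le_trans A H) with (M (M u d) (St (M u d))).
   + apply (le_m A H). apply (le_m A H). apply (le_m_r A H).
     apply (le_trans A H) with (M (St (M u d)) d); [apply (le_m_l A H)|apply (le_m_r A H)].
     apply (le_trans A H) with (M (St (M u d)) d); apply (le_m_l A H).
   + rewrite (sm A H). apply (le_refl A H).
Qed.

Lemma phi_plus A (H : is_ddpa A) (u d : car A) : M d (Pl d) = Zr ->
  M (Pl u) d = M (Pl (M u d)) d.
Proof.
 intro hd. rewrite (p_meet A H), (mcom A H (J _ _) d), (mdist A H), hd, (j0 A H), (mcom A H). reflexivity.
Qed.


Lemma phi_cong A (H : is_ddpa A) (d : car A) : M d (Pl d) = Zr -> is_congruence A (phi A d).
Proof.
 intro hd. unfold phi. repeat split.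
 - intros x y h; auto.
 - intros x y z h1 h2; congruence.
 - intros x x' y y' h1 h2.
   rewrite (mcom A H (J x y) d), (mcom A H (J x' y') d), !(mdist A H).
   rewrite (mcom A H d x), (mcom A H d y), (mcom A H d x'), (mcom A H d y'), h1, h2. reflexivity.
 - intros x x' y y' h1 h2. rewrite (mm_d A H x), (mm_d A H x'), h1, h2. reflexivity.
 - intros x x' h. rewrite (phi_star A H x), (phi_star A H x'), h. reflexivity.
 - intros x x' h. rewrite (phi_plus A H x), (phi_plus A H x'), h by auto. reflexivity.
Qed.
Definition Rr (A : alg) (u v : car A) : Prop := astar A u = astar A v /\ aplus A u = aplus A v.

Lemma Rr_cong A (H : is_ddpa A) : is_congruence A (Rr A).
Proof.
 unfold is_congruence, Rr. repeat split.
 - destruct H0; symmetry; auto.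
 - destruct H0; symmetry; auto.
 - destruct H0, H1. rewrite H0; auto.
 - destruct H0, H1. rewrite H2; auto.
 - destruct H0, H1. rewrite !(s_join A H), H0, H1. reflexivity.
 - destruct H0 as [h1 h2], H1 as [h3 h4].
   rewrite <- (ppp A H (J x y)), <- (ppp A H (J x' y')), !(pp_join A H), h2, h4. reflexivity.
 - destruct H0 as [h1 h2], H1 as [h3 h4].
   rewrite <- (sss A H (M x y)), <- (sss A H (M x' y')), !(ss_meet A H), h1, h3. reflexivity.
 - destruct H0 as [h1 h2], H1 as [h3 h4]. rewrite !(p_meet A H), h2, h4. reflexivity.
 - destruct H0 as [h1 h2]. rewrite h1. reflexivity.
 - destruct H0 as [h1 h2]. rewrite h1. reflexivity.
 - destruct H0 as [h1 h2]. rewrite h2. reflexivity.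
 - destruct H0 as [h1 h2]. rewrite h2. reflexivity.
Qed.

Definition qv (A : alg) n (x y : car A) : car A :=
  M (M (Gn A n (St (M (St x) (St (St y))))) (Gn A n (St (M (St y) (St (St x))))))
    (M (Gn A n (J (Pl x) (Pl (Pl y)))) (Gn A n (J (Pl y) (Pl (Pl x))))).

Definition qterm {X} n (x y : term X) : term X :=
  TMeet (TMeet (gterm n (TStar (TMeet (TStar x) (TStar (TStar y)))))
               (gterm n (TStar (TMeet (TStar y) (TStar (TStar x))))))
        (TMeet (gterm n (TJoin (TPlus x) (TPlus (TPlus y))))
               (gterm n (TJoin (TPlus y) (TPlus (TPlus x))))).

Definition dterm {X} n (x y z : term X) : term X :=
  TJoin (TMeet (qterm n x y) z) (TMeet (TStar (qterm n x y)) x).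

Lemma eval_qterm {X} A (env : X -> car A) n x y :
  eval_term A env (qterm n x y) = qv A n (eval_term A env x) (eval_term A env y).
Proof. unfold qterm, qv. simpl. rewrite !eval_gterm. reflexivity. Qed.

Lemma simple_e01 A (H : is_ddpa A) (hs : simple_alg A) n
  (hn : forall x : car A, Gn A n x = Gn A (S n) x) (x : car A) :
  Gn A n x = One \/ Gn A n x = Zr.
Proof.
 set (c := Gn A n x).
 assert (hc : St (Pl c) = c) by exact (eq_sym (hn x)).
 assert (hd : M c (Pl c) = Zr).
 { assert (e : M (St (Pl c)) (Pl c) = Zr) by (rewrite (mcom A H), (sm A H); reflexivity).
   rewrite hc in e. exact e. }
 destruct (proj2 hs _ (phi_cong A H c hd)) as [hid|htot].
 - left. apply hid. unfold phi. rewrite (midem A H), (mcom A H), (m1 A H). reflexivity.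
 - right. specialize (htot (azero A) (aone A)). unfold phi in htot.
   rewrite (mcom A H), (m0 A H), (mcom A H), (m1 A H) in htot. auto.
Qed.

Lemma Gn_one A (H : is_ddpa A) n (x : car A) : Gn A n x = One -> x = One.
Proof. intro e. apply (le1_eq A H). rewrite <- e. apply Gn_le; auto. Qed.

Lemma simple_R A (H : is_ddpa A) (hs : simple_alg A) (x y : car A) :
  St x = St y -> Pl x = Pl y -> x = y.
Proof.
 intros h1 h2.
 destruct (proj2 hs _ (Rr_cong A H)) as [hid|htot].
 - apply hid; split; auto.
 - exfalso. destruct (htot (azero A) (aone A)) as [e _].
   rewrite (s0 A H), (s1 A H) in e.
   destruct (proj1 hs) as (a & b & hab). apply hab.
   rewrite <- (m1 A H a), <- (m1 A H b), e, !(m0 A H). reflexivity.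
Qed.

Lemma Gn_one_or_zero A (H : is_ddpa A) (hs : simple_alg A) n
  (hn : forall x : car A, Gn A n x = Gn A (S n) x) (w : car A) :
  w <> One -> Gn A n w = Zr.
Proof. intro h. destruct (simple_e01 A H hs n hn w) as [e|e]; auto.
 exfalso; apply h; eapply Gn_one; eauto. Qed.

Lemma m_zero_l A (H : is_ddpa A) (x : car A) : M Zr x = Zr.
Proof. rewrite (mcom A H); apply m0; auto. Qed.

Lemma qv_eq A (H : is_ddpa A) n (x : car A) : qv A n x x = One.
Proof.
 unfold qv. rewrite (sm A H), (s0 A H), (pj A H), !(Gn_O A H), !(m1 A H). reflexivity.
Qed.

Lemma qv_neq A (H : is_ddpa A) (hs : simple_alg A) n
  (hn : forall x : car A, Gn A n x = Gn A (S n) x) (x y : car A) :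
  x <> y -> qv A n x y = Zr.
Proof.
 intro hxy. unfold qv.
 assert (hst : forall w : car A, w <> Zr -> St w <> One).
 { intros w hw e. apply hw. rewrite <- (m1 A H w), <- e. apply sm; auto. }
 destruct (classic (St x = St y)) as [es|ns].
 - assert (ep : Pl x <> Pl y) by (intro; apply hxy; apply (simple_R A H hs); auto).
   destruct (classic (J (Pl x) (Pl (Pl y)) = One)) as [e1|n1].
   + destruct (classic (J (Pl y) (Pl (Pl x)) = One)) as [e2|n2].
     * exfalso. apply ep. apply (le_antisym A H).
       -- rewrite (jcom A H) in e2. apply (pgal A H) in e2. rewrite (ppp A H) in e2. exact e2.
       -- rewrite (jcom A H) in e1. apply (pgal A H) in e1. rewrite (ppp A H) in e1. exact e1.
     * rewrite (Gn_one_or_zero A H hs n hn _ n2), (m0 A H), (m0 A H). reflexivity.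
   + rewrite (Gn_one_or_zero A H hs n hn _ n1), (m_zero_l A H), (m0 A H). reflexivity.
 - destruct (classic (M (St x) (St (St y)) = Zr)) as [e1|n1].
   + destruct (classic (M (St y) (St (St x)) = Zr)) as [e2|n2].
     * exfalso. apply ns. apply (le_antisym A H).
       -- apply (zero_iff A H) in e1. rewrite (sss A H) in e1. exact e1.
       -- apply (zero_iff A H) in e2. rewrite (sss A H) in e2. exact e2.
     * rewrite (Gn_one_or_zero A H hs n hn _ (hst _ n2)), (m0 A H), (m_zero_l A H). reflexivity.
   + rewrite (Gn_one_or_zero A H hs n hn _ (hst _ n1)), !(m_zero_l A H). reflexivity.
Qed.

Lemma si_comp A (H : is_ddpa A) (hsi : subdirectly_irreducible A) (c : car A) :
  J c (St c) = One -> c = One \/ c = Zr.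
Proof.
 intro hc.
 assert (hc1 : M c (Pl c) = Zr).
 { apply (le0_eq A H). rewrite <- (sm A H c). apply (m_mono A H). apply (le_refl A H).
   apply (pgal A H). exact hc. }
 assert (hc2 : M (St c) (Pl (St c)) = Zr).
 { apply (le0_eq A H). rewrite <- (sm A H c), (mcom A H c). apply (m_mono A H). apply (le_refl A H).
   apply (pgal A H). rewrite (jcom A H). exact hc. }
 destruct hsi as (a & b & hab & hmon).
 pose proof (phi_cong A H c hc1) as C1.
 pose proof (phi_cong A H (St c) hc2) as C2.
 destruct (classic (exists x y, x <> y /\ phi A c x y)) as [e1|n1].
 - destruct (classic (exists x y, x <> y /\ phi A (St c) x y)) as [e2|n2].
   + exfalso. apply hab. pose proof (hmon _ C1 e1) as h1. pose proof (hmon _ C2 e2) as h2.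
     unfold phi in h1, h2.
     rewrite <- (m1 A H a), <- (m1 A H b), <- hc, !(mdist A H), h1, h2.
     reflexivity.
   + right. assert (e : St c = One).
     { apply NNPP. intro ne. apply n2. exists (St c), (aone A). split; auto.
       unfold phi. rewrite (midem A H), (mcom A H), (m1 A H). reflexivity. }
     rewrite <- (m1 A H c), <- e. apply sm; auto.
 - left. apply NNPP. intro ne. apply n1. exists c, (aone A). split; auto.
   unfold phi. rewrite (midem A H), (mcom A H), (m1 A H). reflexivity.
Qed.

Lemma dir2 (V : aclass) :
  is_variety V -> (forall A, V A -> is_ddpa A) -> finitely_generated V ->
  (exists L : list alg, (forall A, In A L -> simple_alg A) /\ generated_by L V) ->
  discriminator_variety V.
Proof.
 intros hV hd [K [hKf hK]] [L [hLs hL]].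
 destruct (stab_list K) as [n hn].
 { intros A hA. split; auto. apply hd. apply (proj1 (proj2 hK)); auto. }
 assert (hrange : forall A, V A -> forall x : car A, Gn A n x = Gn A (S n) x).
 { intros A hA x.
   pose proof (transfer (gterm n (@TVar unit tt)) (gterm (S n) (TVar tt)) K V hK) as ht.
   assert (hs : sat (gterm n (@TVar unit tt)) (gterm (S n) (TVar tt)) A).
   { apply ht; auto. intros B hB env. rewrite !eval_gterm. simpl. apply hn; auto. }
   specialize (hs (fun _ => x)). rewrite !eval_gterm in hs. exact hs. }
 assert (hLV : forall B, In B L -> V B) by (intros; apply (proj1 (proj2 hL)); auto).
 assert (id1 : forall A, V A -> sat (dterm n (@TVar var3 vx) (@TVar var3 vx) (@TVar var3 vz)) (@TVar var3 vz) A).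
 { apply (transfer _ _ L V hL). intros B hB env.
   assert (HB := hd B (hLV B hB)).
   unfold dterm. cbn [eval_term]. rewrite eval_qterm. cbn [eval_term].
   rewrite (qv_eq B HB), (s1 B HB), (m_zero_l B HB), (j0 B HB), (mcom B HB), (m1 B HB).
   reflexivity. }
 assert (id2 : forall A, V A -> sat (TJoin (qterm n (@TVar var3 vx) (@TVar var3 vy)) (TStar (qterm n (@TVar var3 vx) (@TVar var3 vy)))) TOne A).
 { apply (transfer _ _ L V hL). intros B hB env.
   assert (HB := hd B (hLV B hB)).
   cbn [eval_term]. rewrite eval_qterm. cbn [eval_term].
   destruct (classic (env vx = env vy)) as [e|ne].
   - rewrite e, (qv_eq B HB), (s1 B HB), (j0 B HB). reflexivity.
   - rewrite (qv_neq B HB (hLs B hB) n (hrange B (hLV B hB)) _ _ ne), (s0 B HB), (jcom B HB), (j0 B HB).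
     reflexivity. }
 assert (id3 : forall A, V A -> sat (TMeet (qterm n (@TVar var3 vx) (@TVar var3 vy)) (@TVar var3 vx)) (TMeet (qterm n (@TVar var3 vx) (@TVar var3 vy)) (@TVar var3 vy)) A).
 { apply (transfer _ _ L V hL). intros B hB env.
   assert (HB := hd B (hLV B hB)).
   cbn [eval_term]. rewrite eval_qterm. cbn [eval_term].
   destruct (classic (env vx = env vy)) as [e|ne].
   - rewrite e. reflexivity.
   - rewrite (qv_neq B HB (hLs B hB) n (hrange B (hLV B hB)) _ _ ne), !(m_zero_l B HB).
     reflexivity. }
 exists (dterm n (@TVar var3 vx) (@TVar var3 vy) (@TVar var3 vz)). intros A hA hsi x y z.
 assert (HA := hd A hA).
 split.
 - intro hxy.
   specialize (id2 A hA (env3 A x y z)). cbn [eval_term] in id2. rewrite eval_qterm in id2.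
   cbn [eval_term env3] in id2.
   specialize (id3 A hA (env3 A x y z)). cbn [eval_term] in id3. rewrite !eval_qterm in id3.
   cbn [eval_term env3] in id3.
   unfold dterm. cbn [eval_term]. rewrite eval_qterm. cbn [eval_term env3].
   destruct (si_comp A HA hsi _ id2) as [e|e]; rewrite e in *.
   + exfalso. apply hxy. rewrite !(mcom A HA One), !(m1 A HA) in id3. exact id3.
   + rewrite (s0 A HA), (m_zero_l A HA), (jcom A HA), (j0 A HA), (mcom A HA), (m1 A HA). reflexivity.
 - intro e. subst y.
   specialize (id1 A hA (env3 A x x z)). unfold dterm in *. cbn [eval_term] in *.
   rewrite !eval_qterm in *. cbn [eval_term env3] in *. exact id1.
Qed.

Lemma rep_ex (A : alg) (Pr : car A -> Prop) : exists y, (exists z, Pr z) -> Pr y.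
Proof.
 destruct (classic (exists z, Pr z)) as [[z hz]|n].
 - exists z; auto.
 - exists (azero A); intro h; contradiction.
Qed.

Definition rep (A : alg) (Pr : car A -> Prop) : car A :=
  proj1_sig (constructive_indefinite_description _ (rep_ex A Pr)).

Lemma rep_spec A Pr : (exists z, Pr z) -> Pr (rep A Pr).
Proof. unfold rep. destruct (constructive_indefinite_description _ _); auto. Qed.

Definition qcar (A : alg) (th : car A -> car A -> Prop) : Type :=
  { Pr : car A -> Prop | exists x, Pr = th x }.

Definition qpi (A : alg) th (x : car A) : qcar A th := exist _ (th x) (ex_intro _ x eq_refl).

Definition qrep A th (u : qcar A th) : car A := rep A (proj1_sig u).

Definition Qalg (A : alg) (th : car A -> car A -> Prop) : alg :=
  {| car := qcar A th;
     ajoin := fun u v => qpi A th (ajoin A (qrep A th u) (qrep A th v));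
     ameet := fun u v => qpi A th (ameet A (qrep A th u) (qrep A th v));
     astar := fun u => qpi A th (astar A (qrep A th u));
     aplus := fun u => qpi A th (aplus A (qrep A th u));
     azero := qpi A th (azero A);
     aone := qpi A th (aone A) |}.

Lemma qpi_eq A th (C : is_congruence A th) x y : th x y -> qpi A th x = qpi A th y.
Proof.
 destruct C as (hr & hs & ht & _). intro h. unfold qpi.
 apply subset_eq_compat.
 apply functional_extensionality. intro z. apply propositional_extensionality.
 split; intro h'; eauto.
Qed.

Lemma qpi_ker A th (C : is_congruence A th) x y : qpi A th x = qpi A th y -> th x y.
Proof.
 destruct C as (hr & hs & ht & _). intro h. apply (f_equal (@proj1_sig _ _)) in h.
 simpl in h. rewrite h. apply hr.
Qed.

Lemma qrep_spec A th (C : is_congruence A th) x : th x (qrep A th (qpi A th x)).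
Proof. unfold qrep, qpi; simpl. apply rep_spec. exists x. apply (proj1 C). Qed.

Lemma qpi_hom A th (C : is_congruence A th) : is_hom A (Qalg A th) (qpi A th).
Proof.
 pose proof C as (hr & hs & ht & hj & hm & hst & hp).
 repeat split; intros; simpl; apply qpi_eq; auto; apply qrep_spec with (x := x) in C as Cx; auto.
 - apply hj; auto. apply qrep_spec; auto.
 - apply hm; auto. apply qrep_spec; auto.
Qed.

Lemma qpi_surj A th : forall u : car (Qalg A th), exists x, qpi A th x = u.
Proof.
 intros [Pr [x e]]. exists x. unfold qpi. apply subset_eq_compat. auto.
Qed.

Definition maxc (A : alg) (a b : car A) (th : car A -> car A -> Prop) : Prop :=
  is_congruence A th /\ ~ th a b /\
  forall psi, is_congruence A psi -> (forall x y, th x y -> psi x y) ->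
    psi a b \/ (forall x y, psi x y -> th x y).

Lemma filter_le {T} (f g : T -> bool) (l : list T) :
  (forall p, In p l -> f p = true -> g p = true) ->
  length (filter f l) <= length (filter g l).
Proof.
 induction l as [|p l IH]; simpl; intro h; auto.
 destruct (f p) eqn:ef.
 - rewrite (h p (or_introl eq_refl) ef). simpl. apply le_n_S. apply IH; auto.
 - destruct (g p); simpl; [apply le_S|]; apply IH; auto.
Qed.

Lemma filter_lt {T} (f g : T -> bool) (l : list T) q :
  (forall p, In p l -> f p = true -> g p = true) -> In q l -> f q = false -> g q = true ->
  length (filter f l) < length (filter g l).
Proof.
 induction l as [|p l IH]; simpl; intros h hq hf hg; [contradiction|].
 destruct hq as [e|hq].
 - subst. rewrite hf, hg. simpl. apply le_n_S. apply filter_le; auto.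
 - destruct (f p) eqn:ef.
   + rewrite (h p (or_introl eq_refl) ef). simpl. apply le_n_S. apply IH; auto.
   + destruct (g p); simpl; [apply le_S|]; apply IH; auto.
Qed.

Lemma filter_len {T} (f : T -> bool) l : length (filter f l) <= length l.
Proof. induction l; simpl; auto. destruct (f a); simpl; lia. Qed.

Definition pb (Q : Prop) : bool := if excluded_middle_informative Q then true else false.

Lemma pb_true Q : pb Q = true <-> Q.
Proof. unfold pb. destruct (excluded_middle_informative Q); split; intro; auto; discriminate. Qed.

Lemma pb_false Q : pb Q = false <-> ~ Q.
Proof. unfold pb. destruct (excluded_middle_informative Q); split; intro; auto; try contradiction; discriminate. Qed.

Lemma nat_max (Pn : nat -> Prop) B : Pn 0 -> (forall n, Pn n -> n <= B) ->
  exists n, Pn n /\ ~ Pn (S n).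
Proof.
 intros h0 hb. apply NNPP. intro hn.
 assert (forall n, Pn n) as hall.
 { induction n; auto. apply NNPP. intro h. apply hn. exists n. auto. }
 specialize (hb (S B) (hall (S B))). lia.
Qed.

Lemma cong_eq A : is_congruence A (@eq (car A)).
Proof. repeat split; intros; subst; auto. Qed.

Lemma maxc_ex A (l : list (car A)) (hl : forall x, In x l) (a b : car A) :
  a <> b -> exists th, maxc A a b th.
Proof.
 intro hab.
 set (LL := list_prod l l).
 set (cnt := fun th : car A -> car A -> Prop => length (filter (fun p => pb (th (fst p) (snd p))) LL)).
 set (good := fun n => exists th, is_congruence A th /\ ~ th a b /\ n <= cnt th).
 assert (g0 : good 0).
 { exists eq. split; [apply cong_eq|]. split; auto. lia. }
 assert (gb : forall n, good n -> n <= length LL).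
 { intros n [th [_ [_ h]]]. unfold cnt in h. pose proof (filter_len (fun p => pb (th (fst p) (snd p))) LL). lia. }
 destruct (nat_max good (length LL) g0 gb) as [n [[th [C [hn hc]]] hns]].
 { exists th. split; auto. split; auto.
   intros psi Cp hsub.
   destruct (classic (psi a b)) as [e|ne]; [left; auto|right].
   intros x y hxy. apply NNPP. intro hnt. apply hns.
   exists psi. split; auto. split; auto.
   assert (cnt th < cnt psi).
   { unfold cnt. apply filter_lt with (q := (x, y)).
     - intros p _ hp. apply (proj2 (pb_true _)). apply (proj1 (pb_true _)) in hp. apply hsub; auto.
     - unfold LL. apply in_prod; auto.
     - apply (proj2 (pb_false _)). auto.
     - apply (proj2 (pb_true _)). auto. }
   lia. }
Qed.

Lemma maxc_si A a b th : maxc A a b th -> subdirectly_irreducible (Qalg A th).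
Proof.
 intros [C [hab hmax]].
 exists (qpi A th a), (qpi A th b). split.
 - intro e. apply hab. apply qpi_ker; auto.
 - intros psi Cp [u [v [huv hp]]].
   pose proof (qpi_hom A th C) as (hj & hm & hs & hpl & _).
   set (psi' := fun x y => psi (qpi A th x) (qpi A th y)).
   assert (Cp' : is_congruence A psi').
   { destruct Cp as (r & s & t & cj & cm & cs & cp). unfold psi'.
     repeat split; intros.
     - apply r.
     - apply s; auto.
     - eapply t; eauto.
     - rewrite !hj. apply cj; auto.
     - rewrite !hm. apply cm; auto.
     - rewrite !hs. apply cs; auto.
     - rewrite !hpl. apply cp; auto. }
   destruct (hmax psi' Cp') as [h|h].
   + intros x y hxy. unfold psi'. rewrite (qpi_eq A th C x y hxy). apply (proj1 Cp).
   + exact h.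
   + exfalso. destruct (qpi_surj A th u) as [x ex]. destruct (qpi_surj A th v) as [y ey].
     subst. apply huv. apply qpi_eq; auto; apply h; exact hp.
Qed.

Lemma disc_simple A t : is_discriminator_term A t -> subdirectly_irreducible A -> simple_alg A.
Proof.
 intros hd [a [b [hab _]]]. split; [exists a, b; auto|].
 intros psi Cp.
 destruct (classic (exists x y, x <> y /\ psi x y)) as [[x [y [hxy hp]]]|n].
 - right.
   assert (hx : forall u, psi x u).
   { intro u.
     pose proof (cong_eval A psi (env3 A x y u) (env3 A x x u) t Cp) as h.
     destruct Cp as (r & s & _).
     assert (h' : psi (eval_term A (env3 A x y u) t) (eval_term A (env3 A x x u) t)).
     { apply h. intros []; simpl; auto. }
     rewrite (proj1 (hd x y u) hxy), (proj2 (hd x x u) eq_refl) in h'. exact h'. }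
   intros u v. destruct Cp as (r & s & tr & _). eapply tr; [apply s, hx|apply hx].
 - left. intros x y h. apply NNPP. intro ne. apply n. exists x, y; auto.
Qed.

Lemma thsel_ex A (p : car A * car A) : exists th, is_congruence A th /\
  (finite_alg A -> fst p <> snd p -> maxc A (fst p) (snd p) th).
Proof.
 destruct (classic (finite_alg A /\ fst p <> snd p)) as [[[l hl] hne]|n].
 - destruct (maxc_ex A l hl _ _ hne) as [th hth]. exists th. split; [apply hth|]. auto.
 - exists eq. split; [apply cong_eq|]. intros h1 h2. exfalso; auto.
Qed.

Definition thsel A (p : car A * car A) : car A -> car A -> Prop :=
  proj1_sig (constructive_indefinite_description _ (thsel_ex A p)).

Lemma thsel_spec A p : is_congruence A (thsel A p) /\
  (finite_alg A -> fst p <> snd p -> maxc A (fst p) (snd p) (thsel A p)).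
Proof. unfold thsel. destruct (constructive_indefinite_description _ _); auto. Qed.

Lemma alg_cover (V : aclass) t : is_variety V ->
  (forall A, V A -> subdirectly_irreducible A -> is_discriminator_term A t) ->
  forall A, V A -> finite_alg A ->
  exists LA : list alg, (forall B, In B LA -> V B /\ simple_alg B) /\
    (forall W, is_variety W -> (forall B, In B LA -> W B) -> W A).
Proof.
 intros hV hdisc A hA hf. pose proof hf as [l hl].
 exists (map (fun p => Qalg A (thsel A p)) (filter (fun p => pb (fst p <> snd p)) (list_prod l l))).
 split.
 - intros B hB. apply in_map_iff in hB. destruct hB as [p [e hp]]. subst B.
   apply filter_In in hp. destruct hp as [_ hp]. apply (proj1 (pb_true _)) in hp.
   destruct (thsel_spec A p) as [C hm]. specialize (hm hf hp).
   assert (hVB : V (Qalg A (thsel A p))).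
   { apply (proj1 hV) with A (qpi A (thsel A p)); auto. apply qpi_hom; auto. apply qpi_surj. }
   split; auto.
   apply disc_simple with t. apply hdisc; auto. eapply maxc_si; eauto.
   eapply maxc_si; eauto.
 - intros W hW hWL.
   set (I := {p : car A * car A | fst p <> snd p}).
   set (F := fun i : I => Qalg A (thsel A (proj1_sig i))).
   assert (hP : W (prod_alg I F)).
   { apply (proj2 (proj2 hW)). intro i. apply hWL. apply in_map_iff.
     exists (proj1_sig i). split; auto. apply filter_In. split.
     - destruct (proj1_sig i) as [x y]. apply in_prod; auto.
     - apply (proj2 (pb_true _)). exact (proj2_sig i). }
   set (f := fun (x : car A) (i : I) => qpi A (thsel A (proj1_sig i)) x : car (F i)).
   apply (proj1 (proj2 hW)) with (prod_alg I F) f; auto.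
   + assert (HH : forall i : I, is_hom A (F i) (qpi A (thsel A (proj1_sig i)))).
     { intro i. apply qpi_hom. apply (proj1 (thsel_spec _ _)). }
     repeat split; intros; apply functional_extensionality_dep; intro i; apply (HH i).
   + intros x y e. apply NNPP. intro ne.
     pose (i := exist (fun p : car A * car A => fst p <> snd p) (x, y) ne : I).
     apply (f_equal (fun g => g i)) in e. unfold f in e. simpl in e.
     destruct (thsel_spec A (x, y)) as [C hm]. specialize (hm hf ne).
     apply (proj1 (proj2 hm)). apply qpi_ker; auto.
Qed.

Lemma dir1 (V : aclass) :
  is_variety V -> finitely_generated V -> discriminator_variety V ->
  exists L : list alg, (forall A, In A L -> simple_alg A) /\ generated_by L V.
Proof.
 intros hV [K [hKf hK]] [t ht].
 assert (hKV : forall A, In A K -> V A) by (intros; apply (proj1 (proj2 hK)); auto).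
 assert (main : exists L, (forall B, In B L -> V B /\ simple_alg B) /\
   (forall A, In A K -> forall W, is_variety W -> (forall B, In B L -> W B) -> W A)).
 { clear hK. induction K as [|A K IH].
   - exists nil. split; intros; [contradiction|]. contradiction.
   - destruct IH as [L [hL1 hL2]].
     + intros; apply hKf; simpl; auto.
     + intros; apply hKV; simpl; auto.
     + destruct (alg_cover V t hV ht A (hKV A (or_introl eq_refl)) (hKf A (or_introl eq_refl)))
         as [LA [hA1 hA2]].
       exists (LA ++ L). split.
       * intros B hB. apply in_app_or in hB. destruct hB; auto.
       * intros A' hA' W hW hWB. destruct hA' as [e|hA'].
         -- subst. apply hA2; auto. intros; apply hWB; apply in_or_app; auto.
         -- apply hL2; auto. intros; apply hWB; apply in_or_app; auto. }
 destruct main as [L [hL1 hL2]].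
 exists L. split; [intros; apply hL1; auto|].
 split; [auto|]. split; [intros; apply hL1; auto|].
 intros W hW hWL A hA. apply (proj2 (proj2 hK)); auto.
 intros B hB. apply (hL2 B hB W hW hWL).
Qed.

Theorem corollary4p2 (V : aclass) :
  is_variety V ->
  (forall A, V A -> is_ddpa A) ->
  finitely_generated V ->
  (discriminator_variety V <->
   exists L : list alg, (forall A, In A L -> simple_alg A) /\ generated_by L V).
Proof.
 intros hV hd hf. split.
 - intro h. apply dir1; auto.
 - intro h. apply dir2; auto.
Qed.
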